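(* If $\partial$ is a tree-like $\mathrm{LM}_{\rightarrow}$ deduction of the sequent $\Rightarrow\rho$, then $\phi(\partial)\le(|\rho|+1)^2$.
   Context: Formulas of $\mathcal{L}_{\rightarrow}$ are built from propositional variables using only $\rightarrow$; $|\alpha|$ is the number of occurrences of $\rightarrow$ in $\alpha$. Sequents are $\Gamma\Rightarrow\alpha$ with $\Gamma$ a finite multiset. $\mathrm{LM}_{\rightarrow}$ has axioms $\Gamma,p\Rightarrow p$ ($p$ a variable) and rules: from $\Gamma,\alpha\Rightarrow\beta$ infer $\Gamma\Rightarrow\alpha\rightarrow\beta$ provided $\Gamma$ contains no $(\alpha\rightarrow\beta)\rightarrow\gamma$; from $\Gamma,\alpha,\beta\rightarrow\gamma\Rightarrow\beta$ infer $\Gamma,(\alpha\rightarrow\beta)\rightarrow\gamma\Rightarrow\alpha\rightarrow\beta$; from $\Gamma,p,\gamma\Rightarrow q$ infer $\Gamma,p,p\rightarrow\gamma\Rightarrow q$ ($p\neq q$ variables, $q$ occurring in $\Gamma$ or $\gamma$); from $\Gamma,\alpha,\beta\rightarrow\gamma\Rightarrow\beta$ and $\Gamma,\gamma\Rightarrow q$ infer $\Gamma,(\alpha\rightarrow\beta)\rightarrow\gamma\Rightarrow q$ ($q$ a variable occurring in $\Gamma$ or $\gamma$). $\phi(\partial)$ (the foundation) is the number of distinct formulas occurring in $\partial$. *)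

(* Defs.v *)
From HB Require Import structures.
From mathcomp Require Import all_boot.

Set Implicit Arguments.
Unset Strict Implicit.
Unset Printing Implicit Defensive.

Inductive form : Type :=
| Var : nat -> form
| Imp : form -> form -> form.

Lemma form_eq_dec : comparable form.
Proof. move=> x y; rewrite /decidable; do 2 decide equality. Qed.

HB.instance Definition _ := comparableMixin form_eq_dec.

Fixpoint fsize (a : form) : nat :=
  match a with
  | Var _ => 0
  | Imp b c => (fsize b + fsize c).+1
  end.

Fixpoint var_in (q : nat) (a : form) : bool :=
  match a with
  | Var p => p == q
  | Imp b c => var_in q b || var_in q c
  end.

Definition var_in_ctx (q : nat) (G : seq form) (c : form) : bool :=
  has (var_in q) G || var_in q c.

Definition is_impimp_of (a b f : form) : bool :=
  if f is Imp (Imp a' b') _ then (a' == a) && (b' == b) else false.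

(* Sequents Gamma => alpha, Gamma a finite multiset represented by a list,
   taken up to permutation (perm_eq) at every node.
   LM G a is the type of tree-like LM_-> deductions of G => a. *)
Inductive LM : seq form -> form -> Type :=
| LM_ax (G' G : seq form) (p : nat) :
    perm_eq G' (Var p :: G) ->
    LM G' (Var p)
| LM_impR (G H : seq form) (a b : form) :
    ~~ has (is_impimp_of a b) G ->
    perm_eq H (a :: G) ->
    LM H b ->
    LM G (Imp a b)
| LM_impimp (G' G H : seq form) (a b c : form) :
    perm_eq G' (Imp (Imp a b) c :: G) ->
    perm_eq H (a :: Imp b c :: G) ->
    LM H b ->
    LM G' (Imp a b)
| LM_var (G' G H : seq form) (p q : nat) (c : form) :
    p != q ->
    var_in_ctx q G c ->
    perm_eq G' (Var p :: Imp (Var p) c :: G) ->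
    perm_eq H (Var p :: c :: G) ->
    LM H (Var q) ->
    LM G' (Var q)
| LM_impL (G' G H1 H2 : seq form) (a b c : form) (q : nat) :
    var_in_ctx q G c ->
    perm_eq G' (Imp (Imp a b) c :: G) ->
    perm_eq H1 (a :: Imp b c :: G) ->
    perm_eq H2 (c :: G) ->
    LM H1 b ->
    LM H2 (Var q) ->
    LM G' (Var q).

Fixpoint formulas (G : seq form) (a : form) (d : LM G a) : seq form :=
  match d with
  | LM_ax _ _ _ _ => a :: G
  | LM_impR _ _ _ _ _ _ d1 => a :: G ++ formulas d1
  | LM_impimp _ _ _ _ _ _ _ _ d1 => a :: G ++ formulas d1
  | LM_var _ _ _ _ _ _ _ _ _ _ d1 => a :: G ++ formulas d1
  | LM_impL _ _ _ _ _ _ _ _ _ _ _ _ d1 d2 =>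
      a :: G ++ formulas d1 ++ formulas d2
  end.

Definition foundation (G : seq form) (a : form) (d : LM G a) : nat :=
  size (undup (formulas d)).

(* Main.v *)
Require Import Defs.
From mathcomp Require Import all_boot.
From mathcomp Require Import zify.

Fixpoint rs (a : form) : seq form :=
  match a with Var _ => [::] | Imp _ y => y :: rs y end.

Fixpoint cl (a : form) : seq form :=
  match a with
  | Var p => [:: Var p]
  | Imp a b => Imp a b :: cl a ++ cl b ++ [seq Imp x b | x <- rs a]
  end.

Lemma cl_self r : r \in cl r.
Proof. by case: r => [p|a b] /=; rewrite inE eqxx. Qed.

Lemma rs_cl a : {subset rs a <= cl a}.
Proof.
elim: a => [p|x _ y IH] f //=; rewrite inE => /orP [/eqP ->|H].
  by rewrite inE !mem_cat cl_self !orbT.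
by rewrite inE !mem_cat (IH _ H) !orbT.
Qed.

Lemma rs_shift a x y : Imp x y \in rs a -> y \in rs a.
Proof.
elim: a => [p|u _ v IH] //=; rewrite inE => /orP [/eqP <-|H].
  by rewrite /= !inE eqxx orbT.
by rewrite inE (IH H) orbT.
Qed.

Lemma cl_sub r x y : Imp x y \in cl r -> x \in cl r /\ y \in cl r.
Proof.
elim: r => [p|a IHa b IHb] /=; first by rewrite inE => /eqP.
rewrite inE !mem_cat => /orP [/eqP [-> ->]|/orP [H|/orP [H|H]]].
- by rewrite !inE !mem_cat !cl_self !orbT.
- by case: (IHa H) => H1 H2; rewrite !inE !mem_cat H1 H2 !orbT.
- by case: (IHb H) => H1 H2; rewrite !inE !mem_cat H1 H2 !orbT.
- case/mapP: H => x' Hx [-> ->].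
  by rewrite !inE !mem_cat (@rs_cl _ _ Hx) cl_self !orbT.
Qed.

Lemma cl_shift r x y z : Imp (Imp x y) z \in cl r -> Imp y z \in cl r.
Proof.
elim: r => [p|a IHa b IHb] /=; first by rewrite inE => /eqP.
rewrite inE !mem_cat => /orP [/eqP [<- <-]|/orP [H|/orP [H|H]]].
- have Hm : Imp y z \in [seq Imp x0 z | x0 <- rs (Imp x y)].
    by apply/mapP; exists y => //; rewrite /= inE eqxx.
  by rewrite !inE !mem_cat Hm !orbT.
- by rewrite !inE !mem_cat (IHa H) !orbT.
- by rewrite !inE !mem_cat (IHb H) !orbT.
- case/mapP: H => x' Hx [Ex Eb]; subst x' b.
  have Hm : Imp y z \in [seq Imp x0 z | x0 <- rs a].
    by apply/mapP; exists y => //; apply: rs_shift Hx.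
  by rewrite !inE !mem_cat Hm !orbT.
Qed.

Arguments cl_sub {r x y}.
Arguments cl_shift {r x y z}.

Lemma size_rs a : size (rs a) <= fsize a.
Proof. elim: a => [p|x _ y IH] //=; lia. Qed.

Lemma size_cl r : size (cl r) <= (fsize r + 1) ^ 2.
Proof.
elim: r => [p|a IHa b IHb] //=.
rewrite !size_cat size_map.
have := size_rs a; nia.
Qed.

Lemma formulas_cl r G1 a1 (d : LM G1 a1) :
  (forall f, f \in a1 :: G1 -> f \in cl r) ->
  forall f, f \in formulas d -> f \in cl r.
Proof.
elim: d => /=.
- by move=> G' G0 p _ H f Hf; apply: H.
- move=> G0 H a b _ Hp d1 IH Hin f; rewrite inE mem_cat => /orP [/eqP ->|/orP [Hf|Hf]].
  + by apply: Hin; rewrite inE eqxx.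
  + by apply: Hin; rewrite inE Hf orbT.
  + apply: IH Hf => g; rewrite inE => /orP [/eqP ->|Hg].
    * have [_ ->] // := cl_sub (Hin _ (mem_head _ _)).
    * move: Hg; rewrite (perm_mem Hp) inE => /orP [/eqP ->|Hg].
      - have [-> _] // := cl_sub (Hin _ (mem_head _ _)).
      - by apply: Hin; rewrite inE Hg orbT.
- move=> G' G0 H a b c Hp1 Hp2 d1 IH Hin f; rewrite inE mem_cat => /orP [/eqP ->|/orP [Hf|Hf]].
  + by apply: Hin; rewrite inE eqxx.
  + by apply: Hin; rewrite inE Hf orbT.
  + have Hc : Imp (Imp a b) c \in cl r by apply: Hin; rewrite inE (perm_mem Hp1) inE eqxx orbT.
    apply: IH Hf => g; rewrite inE => /orP [/eqP ->|Hg].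
    * have [_ ->] // := cl_sub (Hin _ (mem_head _ _)).
    * move: Hg; rewrite (perm_mem Hp2) !inE => /orP [/eqP ->|/orP [/eqP ->|Hg]].
      - have [-> _] // := cl_sub (Hin _ (mem_head _ _)).
      - exact: cl_shift Hc.
      - by apply: Hin; rewrite inE (perm_mem Hp1) inE Hg !orbT.
- move=> G' G0 H p q c _ _ Hp1 Hp2 d1 IH Hin f; rewrite inE mem_cat => /orP [/eqP ->|/orP [Hf|Hf]].
  + by apply: Hin; rewrite inE eqxx.
  + by apply: Hin; rewrite inE Hf orbT.
  + have Hc : Imp (Var p) c \in cl r by apply: Hin; rewrite inE (perm_mem Hp1) !inE eqxx !orbT.
    apply: IH Hf => g; rewrite inE => /orP [/eqP ->|Hg].
    * by apply: Hin; rewrite inE eqxx.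
    * move: Hg; rewrite (perm_mem Hp2) !inE => /orP [/eqP ->|/orP [/eqP ->|Hg]].
      - by apply: Hin; rewrite inE (perm_mem Hp1) inE eqxx !orbT.
      - by have [_ ->] := cl_sub Hc.
      - by apply: Hin; rewrite inE (perm_mem Hp1) !inE Hg !orbT.
- move=> G' G0 H1 H2 a b c q _ Hp1 Hp2 Hp3 d1 IH1 d2 IH2 Hin f.
  rewrite inE !mem_cat => /orP [/eqP ->|/orP [Hf|/orP [Hf|Hf]]].
  + by apply: Hin; rewrite inE eqxx.
  + by apply: Hin; rewrite inE Hf orbT.
  + have Hc : Imp (Imp a b) c \in cl r by apply: Hin; rewrite inE (perm_mem Hp1) inE eqxx orbT.
    have [Hab _] := cl_sub Hc.
    apply: IH1 Hf => g; rewrite inE => /orP [/eqP ->|Hg].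
    * by have [_ ->] := cl_sub Hab.
    * move: Hg; rewrite (perm_mem Hp2) !inE => /orP [/eqP ->|/orP [/eqP ->|Hg]].
      - by have [-> _] := cl_sub Hab.
      - exact: cl_shift Hc.
      - by apply: Hin; rewrite inE (perm_mem Hp1) inE Hg !orbT.
  + have Hc : Imp (Imp a b) c \in cl r by apply: Hin; rewrite inE (perm_mem Hp1) inE eqxx orbT.
    apply: IH2 Hf => g; rewrite inE => /orP [/eqP ->|Hg].
    * by apply: Hin; rewrite inE eqxx.
    * move: Hg; rewrite (perm_mem Hp3) !inE => /orP [/eqP ->|Hg].
      - by have [_ ->] := cl_sub Hc.
      - by apply: Hin; rewrite inE (perm_mem Hp1) inE Hg !orbT.
Qed.

Theorem lemma2 (rho : form) (d : LM [::] rho) :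
  foundation d <= (fsize rho + 1) ^ 2.
Proof.
apply: leq_trans (size_cl rho).
rewrite /foundation; apply: uniq_leq_size; first exact: undup_uniq.
move=> f; rewrite mem_undup; apply: formulas_cl => g.
by rewrite inE => /eqP ->; apply: cl_self.
Qed.
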